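(* Assume that we estimate the Shapley effects with the random-permutation $W$-aggregation procedure, where each $\widehat W_u(m)$ is computed with cost $\kappa N_{|u|}$ as $\widehat W_u(m)=\frac1{N_{|u|}}\sum_{n=1}^{N_{|u|}}\widehat W_u^{(n)}(m)$ with i.i.d. $(\widehat W_u^{(n)}(m))_n$ and with all $(\widehat W_u(m))_{u,m}$ independent, and that the variances $(\mathrm{Var}(\widehat W_u^{(1)}(1)))_{\emptyset\subsetneq u\subsetneq[1:p]}$ are all equal. Then the solution of $$\min_{(N_k)_{k\in[1:p-1]}\in(0,+\infty)^{p-1}}\mathrm{E}\Big[\sum_{i=1}^p\mathrm{Var}\big(\widehat\eta_i\,\big|\,(\sigma_m)_{m\in[1:M]}\big)\Big]\quad\text{subject to}\quad\kappa M\sum_{k=1}^{p-1}N_k=\kappa MN_O(p-1)$$ is $N_k^{**}=N_O$ for all $k\in[1:p-1]$.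
   Context: Setting: $\mathbf{X}=(X_1,\dots,X_p)$, $Y=f(\mathbf{X})$, $f\in L^2(\mathbb{P}_\mathbf{X})$; $W_u$ is $V_u=\mathrm{Var}(\mathrm{E}(Y|\mathbf{X}_u))$ or $E_u=\mathrm{E}(\mathrm{Var}(Y|\mathbf{X}_{-u}))$, with $W_\emptyset=0$, $W_{[1:p]}=\mathrm{Var}(Y)$ known. For a permutation $\sigma$ of $[1:p]$ and $i\in[1:p]$, $P_i(\sigma)=\{\sigma(j):j\in[1:\sigma^{-1}(i)-1]\}$. Random-permutation $W$-aggregation procedure: draw $\sigma_1,\dots,\sigma_M$ i.i.d. uniform permutations; for each $m$ and each $u$ of the form $P_{\sigma_m(j)}(\sigma_m)\cup\{\sigma_m(j)\}$ compute one estimate $\widehat W_u(m)$ (used both for the increment of $\sigma_m(j)$ and as the ''previous'' term for $\sigma_m(j+1)$); then $\widehat\eta_i=\frac{1}{M\mathrm{Var}(Y)}\sum_{m=1}^M(\widehat W_{P_i(\sigma_m)\cup\{i\}}(m)-\widehat W_{P_i(\sigma_m)}(m))$. The accuracy $N_u$ of $\widehat W_u(m)$ is required to depend only on $|u|$, written $N_{|u|}$, and the total cost $\kappa M\sum_{k=1}^{p-1}N_k$ is set to $\kappa MN_O(p-1)$ for a fixed $N_O\in\mathbb{N}^*$. *)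

(* Defs.v *)
From mathcomp Require Import all_boot all_order all_algebra all_fingroup.
From mathcomp Require Import reals.
Set Implicit Arguments. Unset Strict Implicit. Unset Printing Implicit Defensive.
Import Order.TTheory GRing.Theory Num.Theory.
Local Open Scope ring_scope.

(* P_i(sigma) = { sigma(j) : j < sigma^{-1}(i) }  (positions are 0-based) *)
Definition Pred_set (p : nat) (sigma : {perm 'I_p}) (i : 'I_p) : {set 'I_p} :=
  [set sigma j | j : 'I_p & (j < (sigma^-1)%g i)%N].

(* Var(\hat W_u(m)) = Var(\hat W_u^{(1)}(1)) / N_{|u|} for emptyset <> u <> [1:p];
   W_emptyset = 0 and W_[1:p] = Var(Y) are known, hence have zero variance. *)
Definition varWhat (R : realType) (p : nat) (N : nat -> R)
    (v1 : {set 'I_p} -> R) (u : {set 'I_p}) : R :=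
  if (u == set0) || (u == setT) then 0 else v1 u / N #|u|.

(* Var(\hat eta_i | (sigma_m)_m), using the independence of all
   (\hat W_u(m))_{u,m}:  \hat eta_i = (1/(M VarY)) sum_m (W_{P u {i}}(m) - W_P(m)) *)
Definition condvar_eta (R : realType) (p M : nat) (VarY : R) (N : nat -> R)
    (v1 : {set 'I_p} -> R) (sig : {ffun 'I_M -> {perm 'I_p}}) (i : 'I_p) : R :=
  (M%:R * VarY) ^- 2 *
  \sum_(m < M) (varWhat N v1 (i |: Pred_set (sig m) i)
                + varWhat N v1 (Pred_set (sig m) i)).

(* E[ sum_i Var(\hat eta_i | (sigma_m)_m) ], sigma_1..sigma_M iid uniform *)
Definition objective (R : realType) (p M : nat) (VarY : R) (N : nat -> R)
    (v1 : {set 'I_p} -> R) : R :=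
  (#|{ffun 'I_M -> {perm 'I_p}}|%:R)^-1 *
  \sum_(sig : {ffun 'I_M -> {perm 'I_p}}) \sum_(i < p) condvar_eta VarY N v1 sig i.

Definition admissible (R : realType) (p M NO : nat) (kappa : R) (N : nat -> R) : Prop :=
  (forall k, (1 <= k <= p.-1)%N -> 0 < N k) /\
  kappa * M%:R * (\sum_(1 <= k < p) N k) = kappa * M%:R * NO%:R * (p.-1)%:R.

(* Main.v *)
Require Import Defs.
From mathcomp Require Import all_boot all_order all_algebra all_fingroup.
From mathcomp Require Import reals.
From mathcomp Require Import zify ring lra.
Import Order.TTheory GRing.Theory Num.Theory.
Local Open Scope ring_scope.

Lemma card_lt (p k : nat) : (k <= p)%N -> #|[set j : 'I_p | (j < k)%N]| = k.
Proof.
move=> hk.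
rewrite -sum1_card.
under eq_bigl do rewrite inE.
rewrite -(big_mkord (fun j => j < k)%N (fun _ => 1%N)) (@big_cat_nat _ _ _ k 0 p _ _ (leq0n k) hk) /=.
rewrite [X in (_ + X)%N]big_nat_cond [X in (_ + X)%N]big_pred0; last first.
  by move=> j; apply/negbTE/negP; case/andP=> /andP[h1 _] h2; lia.
rewrite addn0 big_nat_cond.
rewrite (eq_bigl (fun i => (0 <= i < k)%N && true)); last by move=> i /=; case: (i < k)%N; rewrite ?andbF ?andbT.
by rewrite -big_nat_cond sum_nat_const_nat muln1 subn0.
Qed.

Lemma card_pred (p : nat) (s : {perm 'I_p}) (i : 'I_p) :
  #|Pred_set s i| = (s^-1)%g i.
Proof.
rewrite /Pred_set card_imset; last exact: perm_inj.
exact: (@card_lt p _ (ltnW (ltn_ord ((s^-1)%g i)))).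
Qed.

Lemma notin_pred (p : nat) (s : {perm 'I_p}) (i : 'I_p) : i \notin Pred_set s i.
Proof.
apply/imsetP => -[j]; rewrite inE => hj ei.
have : (s^-1)%g i = j by rewrite ei permK.
by move=> e; rewrite e ltnn in hj.
Qed.

Lemma setT_card (p : nat) (u : {set 'I_p}) : (u == setT) = (#|u| == p).
Proof.
apply/eqP/eqP => [->|h]; first by rewrite cardsT card_ord.
by apply/eqP; rewrite eqEcard subsetT cardsT card_ord h leqnn.
Qed.

Definition Fk (R : realType) (p : nat) (s2 : R) (N : nat -> R) (k : nat) : R :=
  if (k == 0%N) || (k == p) then 0 else s2 / N k.

Definition Ssum (R : realType) (p : nat) (N : nat -> R) : R :=
  \sum_(1 <= k < p) (N k)^-1.

Arguments Fk {R}.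
Arguments Ssum {R}.

Lemma varWhatE (R : realType) (p : nat) (s2 : R) (N : nat -> R)
  (v1 : {set 'I_p} -> R) :
  (forall u : {set 'I_p}, u != set0 -> u != setT -> v1 u = s2) ->
  forall u, varWhat N v1 u = Fk p s2 N #|u|.
Proof.
move=> hv u; rewrite /varWhat /Fk cards_eq0 -setT_card.
case h0: (u == set0) => //=; case h1: (u == setT) => //=.
by rewrite hv ?h0 ?h1.
Qed.

Arguments varWhatE {R p} s2 N {v1}.

Lemma sumF (R : realType) (p : nat) (s2 : R) (N : nat -> R) : (0 < p)%N ->
  \sum_(j < p) (Fk p s2 N j.+1 + Fk p s2 N j) = 2 * s2 * Ssum p N.
Proof.
move=> hp.
have hT : \sum_(1 <= k < p) Fk p s2 N k = s2 * Ssum p N.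
  rewrite /Ssum mulr_sumr big_nat_cond [RHS]big_nat_cond.
  apply: eq_bigr => k /andP[/andP[h1 h2] _].
  rewrite /Fk; case: ifP => [/orP[/eqP|/eqP] e|_]; first (by subst k); first (by subst k; rewrite ltnn in h2).
  done.
rewrite big_split /= -(big_mkord xpredT (fun j => Fk p s2 N j.+1)) -(big_mkord xpredT (Fk p s2 N)).
have -> : \sum_(0 <= i < p) Fk p s2 N i.+1 = \sum_(1 <= i < p.+1) Fk p s2 N i.
  by rewrite big_add1.
rewrite big_nat_recr //=.
rewrite (big_ltn hp) hT.
have -> : Fk p s2 N p = 0 by rewrite /Fk eqxx orbT.
have -> : Fk p s2 N 0 = 0 by rewrite /Fk eqxx.
ring.
Qed.

Arguments sumF {R p} s2 N.

Lemma objectiveE (R : realType) (p M : nat) (VarY s2 : R) (N : nat -> R)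
  (v1 : {set 'I_p} -> R) :
  (0 < p)%N ->
  (forall u : {set 'I_p}, u != set0 -> u != setT -> v1 u = s2) ->
  objective M VarY N v1 = (M%:R * VarY) ^- 2 * (M%:R * (2 * s2)) * Ssum p N.
Proof.
move=> hp hv.
rewrite /objective.
have inner : forall sig : {ffun 'I_M -> {perm 'I_p}},
  \sum_(i < p) condvar_eta VarY N v1 sig i =
  (M%:R * VarY) ^- 2 * (M%:R * (2 * s2)) * Ssum p N.
  move=> sig; rewrite /condvar_eta -mulr_sumr exchange_big /=.
  rewrite (eq_bigr (fun _ => 2 * s2 * Ssum p N)); last first.
    move=> m _; rewrite -(sumF s2 N hp).
    rewrite (reindex_inj (@perm_inj _ (sig m))) /=.
    apply: eq_bigr => j _.
    rewrite !(varWhatE s2 N hv) cardsU1 (negbTE (notin_pred _ _ _)) card_pred permK.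
    by rewrite add1n.
  rewrite sumr_const card_ord -mulr_natl; ring.
rewrite (eq_bigr _ (fun sig _ => inner sig)) sumr_const.
set n := #|_|.
have hn : (0 < n)%N by apply/card_gt0P; exists [ffun=> 1%g].
have hn' : (n%:R : R) != 0 by rewrite pnatr_eq0 -lt0n.
have gen : forall x : R, n%:R^-1 * (x *+ n) = x.
  by move=> x; rewrite -(mulr_natr x n) mulrC -mulrA mulfV // mulr1.
by rewrite gen.
Qed.

Arguments objectiveE {R p} M VarY s2 N {v1}.

Theorem proposition5 (R : realType) (p M NO : nat) (kappa VarY s2 : R)
    (v1 : {set 'I_p} -> R) :
  (2 <= p)%N -> (0 < M)%N -> (0 < NO)%N -> 0 < kappa -> 0 < VarY -> 0 < s2 ->
  (forall u : {set 'I_p}, u != set0 -> u != setT -> v1 u = s2) ->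
  let Nstar := fun _ : nat => (NO%:R : R) in
  admissible p M NO kappa Nstar /\
  forall N : nat -> R, admissible p M NO kappa N ->
    objective M VarY Nstar v1 <= objective M VarY N v1 /\
    (objective M VarY N v1 = objective M VarY Nstar v1 ->
       forall k, (1 <= k <= p.-1)%N -> N k = NO%:R).
Proof.
move=> hp hM hNO hk hV hs hv Nstar.
have hp0 : (0 < p)%N by lia.
set a : R := NO%:R.
have ha : 0 < a by rewrite ltr0n.
have sumNstar : \sum_(1 <= k < p) Nstar k = a * (p.-1)%:R.
  by rewrite sumr_const_nat subn1 mulr_natr.
split.
  split; first by move=> k _; rewrite /Nstar ltr0n.
  by rewrite sumNstar /a; ring.
move=> N [hpos hsum'].
have hsum : \sum_(1 <= k < p) N k = a * (p.-1)%:R.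
  move: hsum'; rewrite -!mulrA => /(mulfI (lt0r_neq0 hk)).
  have hM' : (M%:R : R) != 0 by rewrite pnatr_eq0 -lt0n.
  by move/(mulfI hM').
pose D k := (N k - a) ^+ 2 / (a ^+ 2 * N k).
have hpos' : forall k, (1 <= k < p)%N -> 0 < N k.
  by move=> k /andP[h1 h2]; apply: hpos; rewrite h1 /=; lia.
have hdiff : Ssum p N - Ssum p Nstar = \sum_(1 <= k < p) D k.
  have e : \sum_(1 <= k < p) D k =
      \sum_(1 <= k < p) ((N k)^-1 - (Nstar k)^-1 + (N k - Nstar k) / a ^+ 2).
    rewrite big_nat_cond [RHS]big_nat_cond; apply: eq_bigr => k /andP[hk' _].
    have := hpos' k hk' => hN.
    rewrite /D /Nstar -/a; field.
    by rewrite (lt0r_neq0 hN) (lt0r_neq0 ha).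
  rewrite e big_split /= sumrB -mulr_suml sumrB hsum sumNstar subrr mul0r addr0.
  by [].
have hD0 : forall k, (1 <= k < p)%N -> 0 <= D k.
  move=> k hk'; rewrite /D divr_ge0 ?sqr_ge0 //.
  by rewrite ltW // mulr_gt0 ?exprn_gt0 ?hpos'.
have hDge : 0 <= \sum_(1 <= k < p) D k.
  by rewrite big_nat_cond sumr_ge0 // => k /andP[hk' _]; apply: hD0.
have hK : 0 < (M%:R * VarY) ^- 2 * (M%:R * (2 * s2)) :> R.
  rewrite mulr_gt0 // ?invr_gt0 ?exprn_gt0 ?mulr_gt0 ?ltr0n //.
rewrite !(objectiveE M VarY s2 _ hp0 hv).
split.
  rewrite ler_pM2l // -subr_ge0 hdiff //.
move=> /(mulfI (lt0r_neq0 hK)) /eqP; rewrite -subr_eq0 hdiff => /eqP h0.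
move=> k hk'.
have hk2 : (k < p)%N by lia.
move: h0; rewrite big_geq_mkord => h0.
have hD0' : forall i : 'I_p, true && (1 <= i)%N -> 0 <= D i.
  move=> i /= hi; apply: hD0; have := ltn_ord i; lia.
have : D k = 0.
  have := @psumr_eq0P _ _ _ _ hD0' h0 (Ordinal hk2); apply => /=; lia.
have hNk : N k != 0 by rewrite (lt0r_neq0 (hpos' k _)) //; lia.
have ha2 : a ^+ 2 * N k != 0 by rewrite mulf_neq0 ?expf_neq0 ?(lt0r_neq0 ha).
rewrite /D => /eqP; rewrite mulf_eq0 invr_eq0 (negbTE ha2) orbF sqrf_eq0 subr_eq0.
by move/eqP.
Qed.
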